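(* Define rational functions of $\xi\in\mathbb C$ by $c_0=\frac1{\xi+10}$, $d_0=\frac{\xi+23}{(\xi+13)(\xi+10)}$, and for $j\ge1$, $v_j=(c_j,d_j)^T=N_jv_{j-1}$ with $$N_j=\begin{pmatrix}8j+10+\xi&0\\-13&8j+13+\xi\end{pmatrix}^{-1}\begin{pmatrix}8(j-1)&10\\0&8(j-1)\end{pmatrix}.$$ Let $\mathring c_0=\mathfrak F^{-1}(\frac{c_0}{d_0}-1)$, $\mathring d_0=0$, and $(\mathring c_j,\mathring d_j)=\mathfrak F^{-1}\big(\frac1{d_0}(c_j,d_j)\big)$ for $j\ge1$. Let $\mathring w_1,\mathring w_2$ solve on $[0,\infty)_t\times[0,\infty)_\gamma$ $$\partial_t\mathring w_1-4\gamma\partial_\gamma\mathring w_1+10\mathring w_1-\frac{10}{1+\gamma^2}\mathring w_2=130e^{-23t},\qquad \partial_t\mathring w_2-4\gamma\partial_\gamma\mathring w_2+13\mathring w_2-13\mathring w_1=130e^{-23t},$$ with $\mathring w_1(0)=-10\frac{\gamma^2}{1+\gamma^2}$, $\mathring w_2(0)=0$. Then each $\mathring c_k,\mathring d_k$ decays faster than $e^{-t}$ as $t\to\infty$, and for every integer $M\ge2$, with $A_M:=\sum_{j=1}^M\mathring c_j(t)(1+\gamma^2)^{-j}$, $B_M:=\sum_{j=1}^M\mathring d_j(t)(1+\gamma^2)^{-j}$, the errors $\alpha:=\mathring w_1-A_M$, $\beta:=\mathring w_2-B_M$ satisfy $$\partial_t\alpha-4\gamma\partial_\gamma\alpha+10\alpha-\frac{10}{1+\gamma^2}\beta=\frac{P_M(t)}{(1+\gamma^2)^{M+1}},\qquad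 \partial_t\beta-4\gamma\partial_\gamma\beta+13\beta-13\alpha=\frac{Q_M(t)}{(1+\gamma^2)^{M+1}},$$ where $P_M=8M\mathring c_M+10\mathring d_M$ and $Q_M=8M\mathring d_M$.
   Context: $\hat f(\xi)=\int_0^\infty e^{-\xi t}f(t)dt$ is the Laplace transform and $\mathfrak F^{-1}$ the inverse Laplace transform (applied componentwise). *)

(* Defs.v *)
From Stdlib Require Import Reals.
From Coquelicot Require Import Coquelicot.
Open Scope R_scope.

Record mat2 := Mat2 { m11 : R; m12 : R; m21 : R; m22 : R }.

Definition mat2_inv (A : mat2) : mat2 :=
  let det := m11 A * m22 A - m12 A * m21 A in
  Mat2 (m22 A / det) (- m12 A / det) (- m21 A / det) (m11 A / det).

Definition mat2_mul (A B : mat2) : mat2 :=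
  Mat2 (m11 A * m11 B + m12 A * m21 B) (m11 A * m12 B + m12 A * m22 B)
       (m21 A * m11 B + m22 A * m21 B) (m21 A * m12 B + m22 A * m22 B).

Definition mat2_app (A : mat2) (v : R * R) : R * R :=
  (m11 A * fst v + m12 A * snd v, m21 A * fst v + m22 A * snd v).

Definition Nmat (j : nat) (xi : R) : mat2 :=
  mat2_mul
    (mat2_inv (Mat2 (8 * INR j + 10 + xi) 0 (-13) (8 * INR j + 13 + xi)))
    (Mat2 (8 * (INR j - 1)) 10 0 (8 * (INR j - 1))).

Fixpoint vcd (j : nat) (xi : R) : R * R :=
  match j with
  | O => (1 / (xi + 10), (xi + 23) / ((xi + 13) * (xi + 10)))
  | S k => mat2_app (Nmat (S k) xi) (vcd k xi)
  end.

Definition c (j : nat) (xi : R) : R := fst (vcd j xi).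
Definition d (j : nat) (xi : R) : R := snd (vcd j xi).

Definition is_laplace (f : R -> R) (xi : R) (l : R) : Prop :=
  is_RInt_gen (fun t => exp (- xi * t) * f t)
    (at_point 0) (Rbar_locally p_infty) l.

Definition IsInvLaplace (f : R -> R) (F : R -> R) : Prop :=
  (forall t, 0 < t -> continuous f t) /\
  exists sigma : R, forall xi, sigma < xi -> is_laplace f xi (F xi).

Definition decays_faster_than_exp (f : R -> R) : Prop :=
  is_lim (fun t => exp t * f t) p_infty 0.

(* Main.v *)
Require Import Defs.
From Stdlib Require Import Reals Lra Psatz List.
From Coquelicot Require Import Coquelicot.
Open Scope R_scope.

Definition eval (l : list (R*R)) (t:R) : R :=
  fold_right (fun p acc => fst p * exp (- snd p * t) + acc) 0 l.
Definition deval (l : list (R*R)) (t:R) : R :=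
  fold_right (fun p acc => - snd p * fst p * exp (- snd p * t) + acc) 0 l.
Definition lap (l : list (R*R)) (xi:R) : R :=
  fold_right (fun p acc => fst p / (xi + snd p) + acc) 0 l.
Definition scale (k:R) (l : list (R*R)) := map (fun p => (k * fst p, snd p)) l.
Definition step (mu:R) (l : list (R*R)) :=
  (lap l (-mu), mu) :: map (fun p => (fst p / (mu - snd p), snd p)) l.

Lemma eval_app l1 l2 t : eval (l1 ++ l2) t = eval l1 t + eval l2 t.
Proof. induction l1 as [|p l IH]; simpl; [lra|rewrite IH; lra]. Qed.
Lemma deval_app l1 l2 t : deval (l1 ++ l2) t = deval l1 t + deval l2 t.
Proof. induction l1 as [|p l IH]; simpl; [lra|rewrite IH; lra]. Qed.
Lemma lap_app l1 l2 t : lap (l1 ++ l2) t = lap l1 t + lap l2 t.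
Proof. induction l1 as [|p l IH]; simpl; [lra|rewrite IH; lra]. Qed.
Lemma eval_scale k l t : eval (scale k l) t = k * eval l t.
Proof. induction l as [|p l IH]; simpl; [lra|rewrite IH; simpl; ring]. Qed.
Lemma deval_scale k l t : deval (scale k l) t = k * deval l t.
Proof. induction l as [|p l IH]; simpl; [lra|rewrite IH; simpl; ring]. Qed.
Lemma lap_scale k l t : lap (scale k l) t = k * lap l t.
Proof. induction l as [|p l IH]; simpl; [lra|rewrite IH; simpl; unfold Rdiv; ring]. Qed.

Lemma is_derive_eval l t : is_derive (eval l) t (deval l t).
Proof.
  induction l as [|p l IH]; simpl.
  - apply (is_derive_ext (fun _ => 0)); [intros; reflexivity| auto_derive; easy].
  - apply (is_derive_ext (fun t => fst p * exp (- snd p * t) + eval l t)); [intros; reflexivity|].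
    apply (is_derive_plus (fun t => fst p * exp (- snd p * t)) (eval l)); [|exact IH].
    auto_derive; [easy|ring].
Qed.

Lemma continuous_eval l t : continuous (eval l) t.
Proof. apply (@ex_derive_continuous R_AbsRing R_NormedModule (eval l)). eexists; apply is_derive_eval. Qed.

Lemma step_ode mu l t : List.Forall (fun p => snd p <> mu) l ->
  deval (step mu l) t + mu * eval (step mu l) t = eval l t.
Proof.
  intros H. unfold step. simpl.
  assert (E: forall l, List.Forall (fun p => snd p <> mu) l ->
    deval (map (fun p => (fst p / (mu - snd p), snd p)) l) t
    + mu * eval (map (fun p => (fst p / (mu - snd p), snd p)) l) t = eval l t).
  { clear H l. intro l. induction l as [|p l IH]; intros H; simpl. lra.
    inversion H; subst. rewrite <- (IH H3). simpl.
    assert (mu - snd p <> 0) by (intro; apply H2; lra). field. auto. }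
  rewrite <- (E l H). ring.
Qed.

Lemma step_lap mu l xi : List.Forall (fun p => snd p <> mu /\ xi + snd p <> 0) l ->
  xi + mu <> 0 -> lap (step mu l) xi = lap l xi / (xi + mu).
Proof.
  intros H Hm. unfold step. simpl.
  assert (E: forall l, List.Forall (fun p => snd p <> mu /\ xi + snd p <> 0) l ->
    lap (map (fun p => (fst p / (mu - snd p), snd p)) l) xi + lap l (-mu) / (xi+mu)
    = lap l xi / (xi + mu)).
  { clear H l. intro l. induction l as [|p l IH]; intros H; simpl. field; auto.
    inversion H; subst. destruct H2 as [H2 H2'].
    assert (mu - snd p <> 0) by (intro; apply H2; lra).
    assert (-mu + snd p <> 0) by (intro; apply H2; lra).
    pose proof (IH H3) as E. simpl. set (X := lap (map _ l) xi) in *. replace X with (lap l xi / (xi+mu) - lap l (-mu) / (xi+mu)) by lra. field. auto. }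
  rewrite <- (E l H). ring.
Qed.

Lemma lim_eps (f : R -> R) : (forall eps, 0 < eps -> exists M, forall t, M < t -> Rabs (f t) < eps) ->
  is_lim f p_infty 0.
Proof.
  intros H. apply is_lim_spec. intros eps. destruct (H eps (cond_pos eps)) as [M HM].
  exists M. intros t Ht. rewrite Rminus_0_r. now apply HM.
Qed.

Lemma exp_decay k : 0 < k -> is_lim (fun t => exp (- k * t)) p_infty 0.
Proof.
  intros Hk. apply lim_eps. intros eps He. exists (- ln eps / k). intros t Ht.
  rewrite Rabs_pos_eq by (left; apply exp_pos).
  rewrite <- (exp_ln eps He). apply exp_increasing.
  apply (Rmult_lt_compat_l k) in Ht; auto.
  replace (k * (- ln eps / k)) with (- ln eps) in Ht by (field; lra). lra.
Qed.

Lemma eval_decay l : List.Forall (fun p => 1 < snd p) l -> decays_faster_than_exp (eval l).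
Proof.
  unfold decays_faster_than_exp. induction l as [|p l IH]; intros H; simpl.
  - apply (is_lim_ext (fun _ => 0)). intros; ring. apply is_lim_const.
  - inversion H; subst.
    apply (is_lim_ext (fun t => fst p * exp (- (snd p - 1) * t) + exp t * eval l t)).
    { intros t. rewrite Rmult_plus_distr_l. f_equal.
      replace (- (snd p - 1) * t) with (t + - snd p * t) by ring. rewrite exp_plus. ring. }
    replace (Finite 0) with (Finite (fst p * 0 + 0)) by (f_equal; ring).
    apply is_lim_plus'. apply (is_lim_scal_l _ (fst p) p_infty 0). apply exp_decay. lra. now apply IH.
Qed.

Lemma laplace_exp a lam xi : 0 < xi + lam ->
  is_laplace (fun t => a * exp (- lam * t)) xi (a / (xi + lam)).
Proof.
  intros H. unfold is_laplace.
  set (f := fun t => - a / (xi + lam) * exp (- (xi + lam) * t)).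
  assert (Df : forall t, is_derive f t (exp (- xi * t) * (a * exp (- lam * t)))).
  { intros t. unfold f. auto_derive. easy.
    replace (- xi * t) with (- (xi+lam) * t + lam * t) by ring.
    replace (- lam * t) with (- (lam * t)) by ring.
    rewrite exp_plus, exp_Ropp. field. split. apply Rgt_not_eq, exp_pos. lra. }
  replace (a / (xi + lam)) with (0 - f 0).
  2:{ unfold f. rewrite Rmult_0_r, exp_0. field. lra. }
  eapply is_RInt_gen_ext.
  2:{ apply (is_RInt_gen_Derive f).
      - apply filter_forall. intros ab x _. eexists. apply Df.
      - apply filter_forall. intros ab x _.
        apply (continuous_ext (fun t => exp (- xi * t) * (a * exp (- lam * t)))).
        intros; symmetry; apply is_derive_unique; apply Df.
        apply (@ex_derive_continuous R_AbsRing R_NormedModule). auto_derive. easy.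
      - intros P HP. exact (locally_singleton _ _ HP).
      - change (is_lim f p_infty 0). apply (is_lim_ext (fun t => - a / (xi + lam) * exp (- (xi + lam) * t))).
        reflexivity.
        replace (Finite 0) with (Rbar_mult (- a / (xi + lam)) 0) by (simpl; f_equal; ring).
        apply is_lim_scal_l. apply exp_decay. exact H. }
  apply filter_forall. intros ab x _. apply is_derive_unique; apply Df.
Qed.


Lemma laplace_ext f g xi l : (forall t, f t = g t) -> is_laplace f xi l -> is_laplace g xi l.
Proof.
  intros E H. unfold is_laplace in *. eapply is_RInt_gen_ext; [|exact H].
  apply filter_forall. intros ab x _. now rewrite E.
Qed.

Lemma laplace_plus f g xi lf lg : is_laplace f xi lf -> is_laplace g xi lg ->
  is_laplace (fun t => f t + g t) xi (lf + lg).
Proof.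
  intros Hf Hg. unfold is_laplace in *.
  pose proof (is_RInt_gen_plus _ _ _ _ Hf Hg) as K.
  eapply is_RInt_gen_ext; [|exact K].
  apply filter_forall. intros ab x _. symmetry. apply Rmult_plus_distr_l.
Qed.

Lemma laplace_minus f g xi lf lg : is_laplace f xi lf -> is_laplace g xi lg ->
  is_laplace (fun t => f t - g t) xi (lf - lg).
Proof.
  intros Hf Hg. unfold is_laplace in *.
  pose proof (is_RInt_gen_minus _ _ _ _ Hf Hg) as K.
  eapply is_RInt_gen_ext; [|exact K].
  apply filter_forall. intros ab x _. symmetry. apply Rmult_minus_distr_l.
Qed.

Lemma laplace_eval l xi : List.Forall (fun p => 0 < xi + snd p) l ->
  is_laplace (eval l) xi (lap l xi).
Proof.
  induction l as [|p l IH]; intros H.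
  - apply (laplace_ext (fun t => 0 * exp (- (1 - xi) * t))). intros; unfold eval; simpl; ring.
    replace (lap nil xi) with (0 / (xi + (1 - xi))) by (unfold lap; simpl; field; lra).
    apply laplace_exp. lra.
  - inversion H; subst.
    apply (laplace_ext (fun t => fst p * exp (- snd p * t) + eval l t)). reflexivity.
    change (lap (p :: l) xi) with (fst p / (xi + snd p) + lap l xi).
    apply laplace_plus. apply laplace_exp. auto. auto.
Qed.

Ltac req := match goal with |- @eq _ ?x ?y => change (@eq R x y) end.

Lemma cont_mul (f g : R -> R) x : continuous f x -> continuous g x -> continuous (fun y => f y * g y) x.
Proof. intros; apply (continuous_mult f g); auto. Qed.

Lemma exR (f : R -> R) a b : (forall z, continuous f z) -> ex_RInt f a b.
Proof. intros H. apply (@ex_RInt_continuous R_CompleteNormedModule). intros; apply H. Qed.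

Lemma RInt_lin3 (f1 f2 f3 : R -> R) c1 c2 c3 a b :
  ex_RInt f1 a b -> ex_RInt f2 a b -> ex_RInt f3 a b ->
  RInt (fun x => c1 * f1 x + c2 * f2 x + c3 * f3 x) a b
  = c1 * RInt f1 a b + c2 * RInt f2 a b + c3 * RInt f3 a b.
Proof.
  intros [I1 H1] [I2 H2] [I3 H3].
  apply is_RInt_unique.
  rewrite (is_RInt_unique _ _ _ _ H1), (is_RInt_unique _ _ _ _ H2), (is_RInt_unique _ _ _ _ H3).
  pose proof (is_RInt_plus _ _ _ _ _ _ (is_RInt_plus _ _ _ _ _ _ (is_RInt_scal _ _ _ c1 _ H1) (is_RInt_scal _ _ _ c2 _ H2)) (is_RInt_scal _ _ _ c3 _ H3)) as K.
  exact K.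
Qed.

Lemma RInt_ge_const (f : R -> R) a b c : a <= b -> ex_RInt f a b ->
  (forall x, a < x < b -> c <= f x) -> (b - a) * c <= RInt f a b.
Proof.
  intros Hab Hf Hc.
  replace ((b - a) * c) with (RInt (fun _ => c) a b).
  apply RInt_le; auto. apply ex_RInt_const.
  rewrite RInt_const. reflexivity.
Qed.

Lemma moment_pos (psi : R -> R) a :
  (forall u, continuous psi u) ->
  (forall k, RInt (fun u => u^k * psi u) 0 1 = 0) ->
  0 < a < 1 -> 0 < psi a -> False.
Proof.
  intros Hc Hm Ha Hp.
  assert (Hl := Hc a). apply continuity_pt_filterlim in Hl.
  rewrite continuity_pt_locally in Hl.
  destruct (Hl (mkposreal (psi a / 2) ltac:(lra))) as [eps Heps]. simpl in Heps.
  set (delta := Rmin eps (Rmin a (1 - a)) / 2).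
  assert (Hd0 : 0 < delta).
  { unfold delta. assert (0 < eps) by apply cond_pos.
    assert (0 < Rmin eps (Rmin a (1 - a))) by (apply Rmin_glb_lt; [|apply Rmin_glb_lt]; lra). lra. }
  assert (Hd1 : delta <= eps / 2) by (unfold delta; pose proof (Rmin_l eps (Rmin a (1-a))); lra).
  assert (Hd2 : delta <= a / 2) by (unfold delta; pose proof (Rmin_r eps (Rmin a (1-a))); pose proof (Rmin_l a (1-a)); lra).
  assert (Hd3 : delta <= (1 - a) / 2) by (unfold delta; pose proof (Rmin_r eps (Rmin a (1-a))); pose proof (Rmin_r a (1-a)); lra).
  assert (Hnear : forall u, Rabs (u - a) < eps -> psi a / 2 < psi u).
  { intros u Hu. specialize (Heps u Hu). apply Rabs_lt_between in Heps. lra. }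
  set (q := fun u => 1 + delta^2/2 - (u - a)^2).
  assert (Cq : forall N k u, continuous (fun u => u^k * (q u ^ N * psi u)) u).
  { intros N k u.
    apply (continuous_ext (fun u => (u^k * q u ^N) * psi u)). intros; apply Rmult_assoc.
    apply cont_mul; [|apply Hc].
    apply (@ex_derive_continuous R_AbsRing R_NormedModule). unfold q. auto_derive. easy. }
  assert (Ex : forall N k a b, ex_RInt (fun u => u^k * (q u ^ N * psi u)) a b).
  { intros. apply exR. intros; apply Cq. }
  assert (Z : forall N k, RInt (fun u => u^k * (q u ^ N * psi u)) 0 1 = 0).
  { induction N as [|N IH]; intros k.
    - rewrite <- (Hm k) at 2. apply RInt_ext. intros; simpl; ring.
    - rewrite (RInt_ext _ (fun u => (1 + delta^2/2 - a^2) * (u^k * (q u ^ N * psi u))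
                + (2 * a) * (u^(S k) * (q u ^ N * psi u)) + (-1) * (u^(S (S k)) * (q u ^ N * psi u)))).
      rewrite RInt_lin3 by apply Ex. rewrite !IH. rewrite !Rmult_0_r, !Rplus_0_r. reflexivity.
      intros x _. unfold q. simpl. ring. }
  destruct (ex_RInt_ub psi 0 1 (exR psi 0 1 Hc)) as [M HM].
  assert (HM' : forall t, 0 <= t <= 1 -> Rabs (psi t) <= M).
  { intros t Ht. apply HM. rewrite Rmin_left, Rmax_right by lra. exact Ht. }
  assert (M0 : 0 <= M) by (pose proof (HM' 0 ltac:(lra)); pose proof (Rabs_pos (psi 0)); lra).
  set (pa := psi a) in *.
  destruct (INR_unbounded (8 * (M + 1) / (delta^3 * pa))) as [N HN].
  set (X := (1 + delta^2/4)^N).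
  assert (HX : 1 + INR N * (delta^2/4) <= X) by (apply Rle_pow_lin; nra).
  set (f := fun u => q u ^ N * psi u).
  assert (If : RInt f 0 1 = 0).
  { rewrite <- (Z N 0%nat) at 2. apply RInt_ext. intros; unfold f; simpl; ring. }
  assert (Exf : forall a b, ex_RInt f a b).
  { intros. apply (ex_RInt_ext (fun u => u^0 * (q u ^ N * psi u))). intros; unfold f; simpl; ring. apply Ex. }
  set (m1 := a - delta / 2). set (m2 := a + delta / 2).
  assert (Split : RInt f 0 1 = RInt f 0 m1 + RInt f m1 m2 + RInt f m2 1).
  { rewrite <- (RInt_Chasles f 0 m1 1) by apply Exf.
    rewrite <- (RInt_Chasles f m1 m2 1) by apply Exf. unfold plus; simpl. req. ring. }
  assert (F1 : forall u, 0 < u < 1 -> - M <= f u).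
  { intros u Hu. unfold f.
    assert (Hq0 : 0 < q u) by (unfold q; nra).
    assert (HqN : 0 < q u ^ N) by (apply pow_lt; lra).
    destruct (Rlt_le_dec (Rabs (u - a)) (2 * delta)) as [Hin|Hout].
    - assert (pa / 2 < psi u) by (apply Hnear; lra). nra.
    - assert (q u <= 1).
      { unfold q. assert (Hs : (2*delta)^2 <= (u - a)^2).
        { unfold Rabs in Hout; destruct (Rcase_abs (u - a)); nra. }
        nra. }
      assert (q u ^ N <= 1) by (rewrite <- (pow1 N); apply pow_incr; lra).
      pose proof (HM' u ltac:(lra)) as Hb. apply Rabs_le_between in Hb. nra. }
  assert (F2 : forall u, m1 < u < m2 -> X * (pa / 2) <= f u).
  { intros u Hu. unfold f, m1, m2 in *.
    assert (Hab : Rabs (u - a) < eps) by (apply Rabs_def1; lra).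
    assert (pa / 2 < psi u) by (apply Hnear; lra).
    assert (Hq : 1 + delta^2/4 <= q u).
    { unfold q. assert ((u-a)^2 <= (delta/2)^2).
      { nra. }
      nra. }
    assert (X <= q u ^ N) by (apply pow_incr; nra).
    assert (0 < X) by (apply pow_lt; nra).
    apply Rmult_le_compat; lra. }
  assert (L1 : (m1 - 0) * (- M) <= RInt f 0 m1).
  { apply RInt_ge_const. unfold m1; lra. apply Exf. intros; apply F1. unfold m1 in *; lra. }
  assert (L2 : (m2 - m1) * (X * (pa / 2)) <= RInt f m1 m2).
  { apply RInt_ge_const. unfold m1, m2; lra. apply Exf. intros; apply F2; lra. }
  assert (L3 : (1 - m2) * (- M) <= RInt f m2 1).
  { apply RInt_ge_const. unfold m2; lra. apply Exf. intros; apply F1. unfold m2 in *; lra. }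
  assert (Key : delta * X * (pa / 2) <= M * (1 - delta)).
  { unfold m1, m2 in *. nra. }
  assert (Hd3p : 0 < delta^3 * pa) by (apply Rmult_lt_0_compat; [apply pow_lt|]; lra).
  assert (HN' : 8 * (M + 1) < INR N * (delta^3 * pa)).
  { apply (Rmult_lt_compat_r (delta^3 * pa)) in HN; [|exact Hd3p].
    unfold Rdiv in HN. rewrite Rmult_assoc, Rinv_l in HN by lra. lra. }
  assert (delta * (1 + INR N * (delta^2/4)) * (pa/2) <= delta * X * (pa/2)).
  { apply Rmult_le_compat_r. lra. apply Rmult_le_compat_l; lra. }
  assert (delta < 1) by lra.
  nra.
Qed.

Lemma moment_zero (psi : R -> R) a :
  (forall u, continuous psi u) ->
  (forall k, RInt (fun u => u^k * psi u) 0 1 = 0) ->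
  0 < a < 1 -> psi a = 0.
Proof.
  intros Hc Hm Ha.
  destruct (Rtotal_order (psi a) 0) as [Hn|[H0|Hp]]; auto.
  - exfalso. apply (moment_pos (fun u => - psi u) a); auto; [| |lra].
    + intros u. apply (continuous_opp psi). apply Hc.
    + intros k.
      assert (E : ex_RInt (fun u => u^k * psi u) 0 1).
      { apply exR. intros z. apply cont_mul. apply (@ex_derive_continuous R_AbsRing R_NormedModule). auto_derive. easy. apply Hc. }
      rewrite (RInt_ext _ (fun u => (-1) * (u^k * psi u) + 0 * (u^k * psi u) + 0 * (u^k * psi u))).
      rewrite RInt_lin3 by exact E. rewrite Hm. req. ring.
      intros; req; ring.
  - exfalso. apply (moment_pos psi a); auto.
Qed.

Lemma exRc (f : R -> R) a b c : a <= b <= c -> ex_RInt f a c -> ex_RInt f a b.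
Proof. apply (@ex_RInt_Chasles_1 R_CompleteNormedModule). Qed.

Lemma dmin (f g : R -> R) x df dg : is_derive f x df -> is_derive g x dg ->
  is_derive (fun y => f y - g y) x (df - dg).
Proof. intros; apply (is_derive_minus f g); auto. Qed.

Lemma dmul (f g : R -> R) x df dg : is_derive f x df -> is_derive g x dg ->
  is_derive (fun y => f y * g y) x (df * g x + f x * dg).
Proof. intros; apply (is_derive_mult f g); auto. intros; apply Rmult_comm. Qed.

Lemma loc_pos b : 0 < b -> locally b (fun z => 0 < z).
Proof.
  intros Hb. exists (mkposreal b Hb). intros z Hz. change (Rabs (z - b) < b) in Hz.
  apply Rabs_lt_between in Hz. lra.
Qed.

Lemma loc_neg b : b < 0 -> locally b (fun z => z < 0).
Proof.
  intros Hb. exists (mkposreal (-b) ltac:(lra)). intros z Hz. change (Rabs (z - b) < -b) in Hz.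
  apply Rabs_lt_between in Hz. lra.
Qed.

Lemma eps_zero x : (forall eps, 0 < eps -> Rabs x <= eps) -> x = 0.
Proof.
  intros H. destruct (Req_dec x 0) as [|Hx]; auto.
  assert (0 < Rabs x) by (apply Rabs_pos_lt; auto).
  specialize (H (Rabs x / 2) ltac:(lra)). lra.
Qed.

Lemma RInt_pt (v : R -> R) a : RInt v a a = 0.
Proof. apply (@RInt_point R_CompleteNormedModule). Qed.

Definition Kf (v : R -> R) (b : R) := RInt v 0 (Rmax 0 b).

Lemma Kf_0 v : Kf v 0 = 0.
Proof. unfold Kf. rewrite Rmax_left by lra. apply RInt_pt. Qed.

Lemma Kf_pos v b : 0 <= b -> Kf v b = RInt v 0 b.
Proof. intros. unfold Kf. rewrite Rmax_right; auto. Qed.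

Lemma Kf_cont0 v : ex_RInt v 0 1 -> continuous (Kf v) 0.
Proof.
  intros Hv. apply continuity_pt_filterlim. apply continuity_pt_locally.
  intros eps. rewrite Kf_0.
  destruct (ex_RInt_ub v 0 1 Hv) as [M HM].
  assert (HM' : forall t, 0 <= t <= 1 -> Rabs (v t) <= Rabs M).
  { intros t Ht. eapply Rle_trans; [apply HM|apply RRle_abs]. rewrite Rmin_left, Rmax_right; lra. }
  assert (He := cond_pos eps).
  set (d := Rmin 1 (eps / (Rabs M + 1))).
  assert (Hd : 0 < d).
  { unfold d. apply Rmin_glb_lt. lra. apply Rdiv_lt_0_compat; auto. pose proof (Rabs_pos M); lra. }
  exists (mkposreal d Hd). intros u Hu. change (Rabs (u - 0) < d) in Hu.
  rewrite Rminus_0_r in *.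
  destruct (Rle_dec u 0) as [Hn|Hp].
  - unfold Kf. rewrite Rmax_left by lra. rewrite RInt_pt. change (Rabs 0 < eps). rewrite Rabs_R0. lra.
  - rewrite Kf_pos by lra. rewrite Rabs_pos_eq in Hu by lra.
    assert (u <= 1) by (pose proof (Rmin_l 1 (eps / (Rabs M + 1))); fold d in H; lra).
    assert (u <= eps / (Rabs M + 1)) by (pose proof (Rmin_r 1 (eps / (Rabs M + 1))); fold d in H0; lra).
    eapply Rle_lt_trans. apply abs_RInt_le_const with (M := Rabs M). lra.
    apply (exRc v 0 u 1). lra. exact Hv.
    intros t Ht. apply HM'. lra.
    pose proof (Rabs_pos M).
    apply (Rmult_le_compat_r (Rabs M + 1)) in H0; [|lra].
    unfold Rdiv in H0. rewrite Rmult_assoc, Rinv_l in H0 by lra. nra.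
Qed.

Lemma Kf_der v b : (forall c, 0 <= c -> ex_RInt v 0 c) -> 0 < b -> continuous v b ->
  is_derive (Kf v) b (v b).
Proof.
  intros Hv Hb Hc.
  apply (is_derive_ext_loc (fun z => RInt v 0 z)).
  - eapply filter_imp; [|apply (loc_pos b Hb)]. intros z Hz. simpl. rewrite Kf_pos; auto; lra.
  - apply (is_derive_RInt v (fun z => RInt v 0 z) 0 b); auto.
    eapply filter_imp; [|apply (loc_pos b Hb)]. intros z Hz.
    apply (@RInt_correct R_CompleteNormedModule). apply Hv. lra.
Qed.

Lemma Kf_derneg v b : b < 0 -> is_derive (Kf v) b 0.
Proof.
  intros Hb.
  apply (is_derive_ext_loc (fun _ => 0)).
  - eapply filter_imp; [|apply (loc_neg b Hb)]. intros z Hz. simpl.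
    unfold Kf. rewrite Rmax_left by lra. symmetry. apply RInt_pt.
  - auto_derive; easy.
Qed.

Lemma Kf_cont v b : (forall c, 0 <= c -> ex_RInt v 0 c) -> (forall c, 0 < c -> continuous v c) ->
  continuous (Kf v) b.
Proof.
  intros Hv Hc.
  destruct (Rtotal_order b 0) as [Hn|[H0|Hp]].
  - apply (@ex_derive_continuous R_AbsRing R_NormedModule). eexists. apply Kf_derneg; auto.
  - subst. apply Kf_cont0. apply Hv. lra.
  - apply (@ex_derive_continuous R_AbsRing R_NormedModule). eexists. apply Kf_der; auto.
Qed.

Lemma gen_extract f L : is_RInt_gen f (at_point 0) (Rbar_locally p_infty) L ->
  forall eps, 0 < eps -> exists M, forall b, M < b -> ex_RInt f 0 b /\ Rabs (RInt f 0 b - L) < eps.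
Proof.
  intros H eps He.
  assert (Hl : locally L (fun y : R => Rabs (y - L) < eps)).
  { exists (mkposreal eps He). intros y Hy. exact Hy. }
  destruct (H _ Hl) as [Q R0 HQ HR HQR].
  destruct HR as [M HM]. exists M. intros b Hb.
  destruct (HQR 0 b HQ (HM b Hb)) as [y [Hy Py]]. simpl in Hy.
  split. exists y. exact Hy.
  rewrite (is_RInt_unique _ _ _ _ Hy). exact Py.
Qed.

Lemma exp_small e : 0 < e -> exists M, forall b, M < b -> exp (- b) < e.
Proof.
  intros He. exists (- ln e). intros b Hb. rewrite <- (exp_ln e He). apply exp_increasing. lra.
Qed.

Lemma exp_pow_neg y k : exp (- y) ^ k = exp (- INR k * y).
Proof.
  induction k as [|k IH]. simpl. replace (-0 * y) with 0 by ring. now rewrite exp_0.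
  rewrite <- tech_pow_Rmult, IH, <- exp_plus, S_INR. f_equal. ring.
Qed.

Lemma RInt_neg (g : R -> R) a b : ex_RInt g a b -> RInt (fun x => - g x) a b = - RInt g a b.
Proof.
  intros E. rewrite (RInt_ext _ (fun x => (-1) * g x + 0 * g x + 0 * g x)).
  rewrite RInt_lin3 by exact E. req. ring. intros; req; ring.
Qed.

Lemma cont_min (f g : R -> R) x : continuous f x -> continuous g x -> continuous (fun y => f y - g y) x.
Proof. intros; apply (continuous_minus f g); auto. Qed.

Lemma cont_exp c x : continuous (fun t => exp (c * t)) x.
Proof. apply (@ex_derive_continuous R_AbsRing R_NormedModule). auto_derive. easy. Qed.

Lemma lerch h sigma : (forall t, 0 < t -> continuous h t) ->
  (forall xi, sigma < xi -> is_laplace h xi 0) -> forall t, 0 < t -> h t = 0.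
Proof.
  intros Hc Hl.
  set (x0 := Rmax sigma 0 + 1).
  set (v := fun (n:nat) t => exp (- INR n * t) * (exp (- x0 * t) * h t)).
  assert (Hv : forall n, is_RInt_gen (v n) (at_point 0) (Rbar_locally p_infty) 0).
  { intros n. assert (sigma < x0 + INR n).
    { unfold x0. pose proof (Rmax_l sigma 0). pose proof (pos_INR n). lra. }
    specialize (Hl _ H). unfold is_laplace in Hl. eapply is_RInt_gen_ext; [|exact Hl].
    apply filter_forall. intros ab x _. unfold v. rewrite <- Rmult_assoc, <- exp_plus.
    f_equal. f_equal. ring. }
  assert (Ext : forall n b, 0 <= b -> ex_RInt (v n) 0 b).
  { intros n b Hb. destruct (gen_extract _ _ (Hv n) 1 Rlt_0_1) as [M HM].
    destruct (HM (Rmax M b + 1)) as [E _]. pose proof (Rmax_l M b); lra.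
    apply (exRc _ 0 b (Rmax M b + 1)); [|exact E]. pose proof (Rmax_r M b); lra. }
  assert (Lim : forall n eps, 0 < eps -> exists M, forall b, M < b -> Rabs (RInt (v n) 0 b) < eps).
  { intros n eps He. destruct (gen_extract _ _ (Hv n) eps He) as [M HM]. exists M.
    intros b Hb. destruct (HM b Hb) as [_ K]. rewrite Rminus_0_r in K. exact K. }
  assert (Cv : forall n t, 0 < t -> continuous (v n) t).
  { intros n t Ht. unfold v. apply cont_mul. apply cont_exp. apply cont_mul. apply cont_exp. apply Hc; auto. }
  set (HH := Kf (v 0%nat)).
  assert (HC : forall b, continuous HH b) by (intros; apply Kf_cont; auto).
  assert (HD : forall b, 0 < b -> is_derive HH b (v 0%nat b)) by (intros; apply Kf_der; auto).
  set (u := fun (n:nat) t => exp (- INR n * t) * HH t).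
  assert (Cu : forall n t, continuous (u n) t).
  { intros n t. unfold u. apply cont_mul. apply cont_exp. apply HC. }
  assert (Exu : forall n a b, ex_RInt (u n) a b) by (intros; apply exR; auto).
  assert (IBP : forall n b, 0 < b ->
     RInt (v n) 0 b = exp (- INR n * b) * HH b + INR n * RInt (u n) 0 b).
  { intros n b Hb.
    set (D := fun x => Kf (v n) x - exp (- INR n * x) * HH x - INR n * Kf (u n) x).
    assert (DD : forall x, 0 < x -> is_derive D x 0).
    { intros x Hx.
      assert (K1 := Kf_der (v n) x (Ext n) Hx (Cv n x Hx)).
      assert (K2 : is_derive (fun x => exp (- INR n * x)) x (- INR n * exp (- INR n * x)))
        by (auto_derive; [easy|ring]).
      assert (K3 := dmul _ _ x _ _ K2 (HD x Hx)).
      assert (K4 := Kf_der (u n) x (fun c _ => Exu n 0 c) Hx (Cu n x)).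
      assert (K5 := is_derive_scal _ x (INR n) _ K4).
      pose proof (dmin _ _ x _ _ (dmin _ _ x _ _ K1 K3) K5) as K.
      replace 0 with (v n x - (- INR n * exp (- INR n * x) * HH x + exp (- INR n * x) * v 0%nat x) - INR n * u n x).
      exact K.
      unfold u, v. simpl (INR 0). replace (-0 * x) with 0 by ring. rewrite exp_0. ring. }
    assert (DC : forall x, continuous D x).
    { intros x. unfold D. apply cont_min. apply cont_min.
      apply Kf_cont; auto. apply cont_mul. apply cont_exp. apply HC.
      apply (continuous_scal_r (INR n) (Kf (u n))). apply Kf_cont; auto. }
    destruct (MVT_gen D 0 b (fun _ => 0)) as [c [_ Hc']].
    - intros x Hx. rewrite Rmin_left, Rmax_right in Hx by lra. apply DD; lra.
    - intros x _. apply continuity_pt_filterlim. apply DC.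
    - assert (D0 : D 0 = 0) by (unfold D, HH; rewrite !Kf_0; ring).
      rewrite D0 in Hc'. unfold D in Hc'. rewrite !Kf_pos in Hc' by lra. lra. }
  set (psi := fun y => if Rle_dec y 0 then 0 else HH (- ln y)).
  assert (Cpsi : forall y, continuous psi y).
  { intros y. destruct (Rtotal_order y 0) as [Hn|[H0|Hp]].
    - apply (continuous_ext_loc psi (fun _ => 0)).
      + eapply filter_imp; [|apply (loc_neg y Hn)]. intros z Hz. unfold psi.
        destruct (Rle_dec z 0); [reflexivity|lra].
      + apply continuous_const.
    - subst. apply continuity_pt_filterlim, continuity_pt_locally. intros eps.
      destruct (Lim 0%nat eps (cond_pos eps)) as [M HM].
      set (T := Rmax M 0 + 1).
      exists (mkposreal (exp (- T)) (exp_pos _)). intros z Hz.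
      change (Rabs (z - 0) < exp (-T)) in Hz.
      assert (P0 : psi 0 = 0) by (unfold psi; destruct (Rle_dec 0 0); [reflexivity|lra]).
      rewrite P0, Rminus_0_r. rewrite Rminus_0_r in Hz.
      unfold psi. destruct (Rle_dec z 0). rewrite Rabs_R0; apply cond_pos.
      rewrite Rabs_pos_eq in Hz by lra.
      assert (Hln : ln z < - T) by (rewrite <- (ln_exp (- T)); apply ln_increasing; lra).
      assert (T0 : M < T /\ 0 < T) by (unfold T; pose proof (Rmax_l M 0); pose proof (Rmax_r M 0); lra).
      unfold HH. rewrite Kf_pos by lra. apply HM. lra.
    - apply (continuous_ext_loc psi (fun z => HH (- ln z))).
      + eapply filter_imp; [|apply (loc_pos y Hp)]. intros z Hz. unfold psi.
        destruct (Rle_dec z 0); [lra|reflexivity].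
      + apply (continuous_comp (fun z => - ln z) HH). apply (continuous_opp ln). apply continuous_ln; auto.
        apply HC. }
  assert (Mom : forall k, RInt (fun y => y^k * psi y) 0 1 = 0).
  { intros k.
    set (f := fun y => y^k * psi y).
    assert (Cf : forall y, continuous f y).
    { intros y. unfold f. apply cont_mul; [|apply Cpsi].
      apply (@ex_derive_continuous R_AbsRing R_NormedModule). auto_derive. easy. }
    assert (Sub : forall b, 0 < b -> RInt (u (S k)) 0 b = RInt f (exp (- b)) 1).
    { intros b Hb.
      assert (Ex2 : ex_RInt (fun y => scal (- exp (- y)) (f (exp (- y)))) 0 b).
      { apply exR. intros z. apply cont_mul. apply (continuous_opp (fun y => exp (- y))).
        apply (continuous_ext (fun y => exp (-1 * y))). intros; f_equal; ring. apply cont_exp.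
        apply (continuous_comp (fun y => exp (- y)) f).
        apply (continuous_ext (fun y => exp (-1 * y))). intros; f_equal; ring. apply cont_exp. apply Cf. }
      rewrite (RInt_ext (u (S k)) (fun y => - (scal (- exp (- y)) (f (exp (- y)))))).
      rewrite RInt_neg by exact Ex2.
      rewrite (RInt_comp f (fun y => exp (- y)) (fun y => - exp (- y))).
      rewrite Ropp_0, exp_0. rewrite <- (opp_RInt_swap f) by (apply exR; auto).
      change (opp ?x) with (- x). req. ring.
      intros; apply Cf.
      intros x _. split. auto_derive; [easy|ring].
      apply (continuous_opp (fun y => exp (- y))).
      apply (continuous_ext (fun y => exp (-1 * y))). intros; f_equal; ring. apply cont_exp.
      intros x Hx. rewrite Rmin_left, Rmax_right in Hx by lra.
      unfold u. replace (- INR (S k) * x) with (- x + - INR k * x) by (rewrite S_INR; ring).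
      rewrite exp_plus.
      unfold f, psi, scal; simpl; unfold mult; simpl.
      destruct (Rle_dec (exp (- x)) 0) as [Hle|_]. pose proof (exp_pos (- x)); lra.
      rewrite ln_exp, Ropp_involutive, exp_pow_neg. ring. }
    destruct (ex_RInt_ub f 0 1 (exR f 0 1 Cf)) as [Mf HMf].
    assert (HMf' : forall t, 0 <= t <= 1 -> Rabs (f t) <= Rabs Mf).
    { intros t Ht. eapply Rle_trans; [apply HMf|apply RRle_abs]. rewrite Rmin_left, Rmax_right; lra. }
    apply eps_zero. intros eps He.
    destruct (Lim (S k) (eps/3) ltac:(lra)) as [M1 HM1].
    destruct (Lim 0%nat (eps/3) ltac:(lra)) as [M2 HM2].
    assert (Hmf : 0 < eps / (3 * (Rabs Mf + 1))).
    { apply Rdiv_lt_0_compat. lra. pose proof (Rabs_pos Mf); lra. }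
    destruct (exp_small _ Hmf) as [M3 HM3].
    set (b := Rmax (Rmax M1 M2) (Rmax M3 0) + 1).
    assert (Hb : M1 < b /\ M2 < b /\ M3 < b /\ 0 < b).
    { unfold b. pose proof (Rmax_l M1 M2). pose proof (Rmax_r M1 M2).
      pose proof (Rmax_l M3 0). pose proof (Rmax_r M3 0).
      pose proof (Rmax_l (Rmax M1 M2) (Rmax M3 0)). pose proof (Rmax_r (Rmax M1 M2) (Rmax M3 0)). lra. }
    destruct Hb as [Hb1 [Hb2 [Hb3 Hb0]]].
    assert (Eb : 0 < exp (- b) < 1).
    { split. apply exp_pos. rewrite <- exp_0. apply exp_increasing. lra. }
    assert (Split : RInt f 0 1 = RInt f 0 (exp (- b)) + RInt f (exp (- b)) 1).
    { rewrite <- (RInt_Chasles f 0 (exp (- b)) 1) by (apply exR; auto). reflexivity. }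
    rewrite Split, <- Sub by lra.
    assert (A1 : Rabs (RInt f 0 (exp (- b))) <= exp (- b) * Rabs Mf).
    { replace (exp (- b) * Rabs Mf) with ((exp (- b) - 0) * Rabs Mf) by ring.
      apply abs_RInt_le_const. lra. apply exR; auto. intros t Ht. apply HMf'. lra. }
    assert (A2 : exp (- b) * Rabs Mf <= eps / 3).
    { specialize (HM3 b Hb3). pose proof (Rabs_pos Mf).
      assert (exp (- b) * (Rabs Mf + 1) <= eps / 3).
      { apply (Rmult_lt_compat_r (Rabs Mf + 1)) in HM3; [|lra].
        unfold Rdiv in HM3. replace (eps * / (3 * (Rabs Mf + 1)) * (Rabs Mf + 1)) with (eps / 3) in HM3
          by (field; lra). lra. }
      nra. }
    assert (A3 : Rabs (INR (S k) * RInt (u (S k)) 0 b) < 2 * eps / 3).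
    { assert (E := IBP (S k) b Hb0).
      replace (INR (S k) * RInt (u (S k)) 0 b) with (RInt (v (S k)) 0 b - exp (- INR (S k) * b) * HH b) by lra.
      eapply Rle_lt_trans. apply Rabs_triang. rewrite Rabs_Ropp, Rabs_mult.
      assert (Rabs (exp (- INR (S k) * b)) <= 1).
      { rewrite Rabs_pos_eq by (left; apply exp_pos). rewrite <- exp_0. left. apply exp_increasing.
        pose proof (pos_INR k). rewrite S_INR. nra. }
      assert (Rabs (HH b) < eps / 3) by (unfold HH; rewrite Kf_pos by lra; apply HM2; lra).
      specialize (HM1 b Hb1). pose proof (Rabs_pos (HH b)). nra. }
    assert (A4 : Rabs (RInt (u (S k)) 0 b) <= Rabs (INR (S k) * RInt (u (S k)) 0 b)).
    { rewrite Rabs_mult. rewrite (Rabs_pos_eq (INR (S k))) by apply pos_INR.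
      pose proof (Rabs_pos (RInt (u (S k)) 0 b)). rewrite S_INR. pose proof (pos_INR k). nra. }
    eapply Rle_trans. apply Rabs_triang. lra. }
  assert (HZ : forall z, 0 < z -> HH z = 0).
  { intros z Hz.
    assert (P : psi (exp (- z)) = 0).
    { apply (moment_zero psi); auto. split. apply exp_pos. rewrite <- exp_0. apply exp_increasing. lra. }
    unfold psi in P. destruct (Rle_dec (exp (- z)) 0). pose proof (exp_pos (- z)); lra.
    rewrite ln_exp, Ropp_involutive in P. exact P. }
  intros t Ht.
  assert (D0 : is_derive HH t 0).
  { apply (is_derive_ext_loc (fun _ => 0)).
    eapply filter_imp; [|apply (loc_pos t Ht)]. intros z Hz. simpl. rewrite HZ; auto.
    auto_derive; easy. }
  pose proof (is_derive_unique _ _ _ D0) as U1.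
  pose proof (is_derive_unique _ _ _ (HD t Ht)) as U2.
  rewrite U1 in U2. unfold v in U2. simpl (INR 0) in U2.
  replace (-0 * t) with 0 in U2 by ring. rewrite exp_0, Rmult_1_l in U2.
  symmetry in U2. apply Rmult_integral in U2. destruct U2 as [U|U]; auto.
  pose proof (exp_pos (- x0 * t)); lra.
Qed.

Lemma cd_rec k xi : 0 < xi ->
  c (S k) xi = (8 * (INR (S k) - 1) * c k xi + 10 * d k xi) / (xi + 8 * INR (S k) + 10) /\
  d (S k) xi = (13 * c (S k) xi + 8 * (INR (S k) - 1) * d k xi) / (xi + 8 * INR (S k) + 13).
Proof.
  intros Hxi. assert (HJ := pos_INR (S k)). set (J := INR (S k)) in *.
  unfold c, d. cbn [vcd]. unfold mat2_app, Nmat, mat2_mul, mat2_inv. cbn [m11 m12 m21 m22 fst snd].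
  fold J.
  split; field; repeat split; nra.
Qed.

Lemma d0_pos xi : 0 < xi -> 0 < d 0 xi.
Proof.
  intros H. unfold d; simpl. apply Rdiv_lt_0_compat. lra. nra.
Qed.

Lemma c0_lap xi : 0 < xi -> c 0 xi / d 0 xi - 1 = lap ((-10, 23) :: nil) xi.
Proof.
  intros H. unfold c, d, lap; simpl. field. repeat split; lra.
Qed.

Fixpoint LL (j : nat) : list (R*R) * list (R*R) :=
  match j with
  | O => ((-10, 23) :: nil, nil)
  | S k =>
    match k with
    | O => ((10, 18) :: nil, step 21 (scale 13 ((10, 18) :: nil)))
    | S _ =>
      let p := LL k in
      let cj := step (8 * INR j + 10) (scale (8 * (INR j - 1)) (fst p) ++ scale 10 (snd p)) in
      (cj, step (8 * INR j + 13) (scale 13 cj ++ scale (8 * (INR j - 1)) (snd p)))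
    end
  end.

Definition Lc j := fst (LL j).
Definition Ld j := snd (LL j).

Lemma Lc_SS k : Lc (S (S k)) =
  step (8 * INR (S (S k)) + 10) (scale (8 * (INR (S (S k)) - 1)) (Lc (S k)) ++ scale 10 (Ld (S k))).
Proof. reflexivity. Qed.
Lemma Ld_SS k : Ld (S (S k)) =
  step (8 * INR (S (S k)) + 13) (scale 13 (Lc (S (S k))) ++ scale (8 * (INR (S (S k)) - 1)) (Ld (S k))).
Proof. reflexivity. Qed.
Lemma Lc_1 : Lc 1 = (10, 18) :: nil. Proof. reflexivity. Qed.
Lemma Ld_1 : Ld 1 = step 21 (scale 13 ((10, 18) :: nil)). Proof. reflexivity. Qed.
Lemma Lc_0 : Lc 0 = (-10, 23) :: nil. Proof. reflexivity. Qed.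
Lemma Ld_0 : Ld 0 = nil. Proof. reflexivity. Qed.

Definition exps (Q : R -> Prop) (l : list (R*R)) := List.Forall (fun p => Q (snd p)) l.

Lemma exps_app Q l1 l2 : exps Q l1 -> exps Q l2 -> exps Q (l1 ++ l2).
Proof. unfold exps. intros; apply Forall_app; auto. Qed.
Lemma exps_scale Q k l : exps Q l -> exps Q (scale k l).
Proof. unfold exps, scale. intros H. apply Forall_map. eapply Forall_impl; [|exact H]. auto. Qed.
Lemma exps_step Q mu l : Q mu -> exps Q l -> exps Q (step mu l).
Proof.
  unfold exps, step. intros Hm H. constructor. exact Hm.
  apply Forall_map. eapply Forall_impl; [|exact H]. auto.
Qed.
Lemma exps_weak (Q1 Q2 : R -> Prop) l : (forall x, Q1 x -> Q2 x) -> exps Q1 l -> exps Q2 l.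
Proof. unfold exps. intros H1 H. eapply Forall_impl; [|exact H]. auto. Qed.

Lemma bounds j : (1 <= j)%nat ->
  exps (fun x => 1 < x <= 8 * INR j + 10) (Lc j) /\ exps (fun x => 1 < x <= 8 * INR j + 13) (Ld j).
Proof.
  intros Hj. induction j as [|j IH]. lia.
  destruct j as [|j].
  - simpl (INR 1). rewrite Lc_1, Ld_1. split.
    + constructor. simpl; lra. constructor.
    + apply exps_step. lra. apply exps_scale. constructor. simpl; lra. constructor.
  - destruct (IH ltac:(lia)) as [IH1 IH2].
    assert (E : INR (S (S j)) = INR (S j) + 1) by apply S_INR.
    assert (P := pos_INR (S j)).
    assert (Hc : exps (fun x => 1 < x <= 8 * INR (S (S j)) + 10) (Lc (S (S j)))).
    { rewrite Lc_SS. apply exps_step. lra. apply exps_app; apply exps_scale.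
      eapply exps_weak; [|exact IH1]. intros x Hx; lra.
      eapply exps_weak; [|exact IH2]. intros x Hx; lra. }
    split; auto.
    rewrite Ld_SS. apply exps_step. lra. apply exps_app; apply exps_scale.
    eapply exps_weak; [|exact Hc]. intros x Hx; lra.
    eapply exps_weak; [|exact IH2]. intros x Hx; lra.
Qed.

Lemma exps_gt1 j : exps (fun x => 1 < x) (Lc j) /\ exps (fun x => 1 < x) (Ld j).
Proof.
  destruct j as [|j].
  - rewrite Lc_0, Ld_0. split. constructor. simpl; lra. constructor. constructor.
  - destruct (bounds (S j) ltac:(lia)) as [B1 B2]. split.
    eapply exps_weak; [|exact B1]. intros x Hx; lra.
    eapply exps_weak; [|exact B2]. intros x Hx; lra.
Qed.

Lemma lap_rel j xi : (1 <= j)%nat -> 0 < xi ->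
  lap (Lc j) xi = c j xi / d 0 xi /\ lap (Ld j) xi = d j xi / d 0 xi.
Proof.
  intros Hj Hxi. assert (D0 := d0_pos xi Hxi).
  induction j as [|j IH]. lia.
  destruct j as [|j].
  - destruct (cd_rec 0 xi Hxi) as [C1 D1]. simpl (INR 1) in C1, D1.
    assert (L1 : lap (Lc 1) xi = c 1 xi / d 0 xi).
    { rewrite Lc_1, C1. unfold lap; simpl. field. lra. }
    split; auto.
    rewrite Ld_1, step_lap.
    + rewrite lap_scale, <- Lc_1, L1, D1. field. lra.
    + constructor. simpl; split; lra. constructor.
    + lra.
  - destruct (IH ltac:(lia)) as [IH1 IH2].
    destruct (bounds (S j) ltac:(lia)) as [B1 B2].
    destruct (cd_rec (S j) xi Hxi) as [C1 D1].
    assert (E : INR (S (S j)) = INR (S j) + 1) by apply S_INR.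
    assert (P := pos_INR (S j)).
    assert (L1 : lap (Lc (S (S j))) xi = c (S (S j)) xi / d 0 xi).
    { rewrite Lc_SS, step_lap.
      - rewrite lap_app, !lap_scale, IH1, IH2, C1. field. lra.
      - apply (exps_app (fun x => x <> 8 * INR (S (S j)) + 10 /\ xi + x <> 0)); apply exps_scale.
        eapply exps_weak; [|exact B1]. intros x Hx; split; lra.
        eapply exps_weak; [|exact B2]. intros x Hx; split; lra.
      - lra. }
    split; auto.
    destruct (bounds (S (S j)) ltac:(lia)) as [B3 _].
    rewrite Ld_SS, step_lap.
    + rewrite lap_app, !lap_scale, L1, IH2, D1. field. lra.
    + apply (exps_app (fun x => x <> 8 * INR (S (S j)) + 13 /\ xi + x <> 0)); apply exps_scale.
      eapply exps_weak; [|exact B3]. intros x Hx; split; lra.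
      eapply exps_weak; [|exact B2]. intros x Hx; split; lra.
    + lra.
Qed.

Lemma ode_rel j t : (1 <= j)%nat ->
  deval (Lc j) t + (8 * INR j + 10) * eval (Lc j) t
    = 8 * (INR j - 1) * eval (Lc (j - 1)) t + 10 * eval (Ld (j - 1)) t /\
  deval (Ld j) t + (8 * INR j + 13) * eval (Ld j) t
    = 13 * eval (Lc j) t + 8 * (INR j - 1) * eval (Ld (j - 1)) t.
Proof.
  intros Hj. destruct j as [|j]. lia.
  destruct j as [|j].
  - simpl (INR 1). simpl (1 - 1)%nat. rewrite Ld_0. split.
    + rewrite Lc_1. unfold deval, eval; simpl. ring.
    + rewrite Ld_1, <- Lc_1.
      replace (8 * 1 + 13) with 21 by ring.
      rewrite step_ode. rewrite eval_scale. unfold eval at 3; simpl. ring.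
      rewrite Lc_1. constructor. simpl; lra. constructor.
  - simpl (S (S j) - 1)%nat.
    destruct (bounds (S j) ltac:(lia)) as [B1 B2].
    destruct (bounds (S (S j)) ltac:(lia)) as [B3 _].
    assert (E : INR (S (S j)) = INR (S j) + 1) by apply S_INR.
    assert (P := pos_INR (S j)).
    split.
    + rewrite Lc_SS. rewrite step_ode. rewrite eval_app, !eval_scale. reflexivity.
      apply (exps_app (fun x => x <> 8 * INR (S (S j)) + 10)); apply exps_scale.
      eapply exps_weak; [|exact B1]. intros x Hx; lra.
      eapply exps_weak; [|exact B2]. intros x Hx; lra.
    + rewrite Ld_SS. rewrite step_ode. rewrite eval_app, !eval_scale. reflexivity.
      apply (exps_app (fun x => x <> 8 * INR (S (S j)) + 13)); apply exps_scale.
      eapply exps_weak; [|exact B3]. intros x Hx; lra.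
      eapply exps_weak; [|exact B2]. intros x Hx; lra.
Qed.

Lemma dg_term C j g : is_derive (fun y => C / (1 + y ^ 2) ^ j) g (C * (- INR j * (2 * g)) / (1 + g ^ 2) ^ (S j)).
Proof.
  assert (P : 0 < 1 + g^2) by nra.
  auto_derive. apply pow_nonzero; lra.
  destruct j as [|j]. simpl. match goal with |- @eq _ ?x ?y => change (@eq R x y) end. field. lra.
  simpl pred. rewrite <- !tech_pow_Rmult. match goal with |- @eq _ ?x ?y => change (@eq R x y) end. simpl pow. rewrite ?Rmult_1_r. assert (HX : (1 + g * g) ^ j <> 0) by (apply pow_nonzero; nra). set (X := (1 + g * g) ^ j) in *. field. nra.
Qed.

Lemma dsum (F : nat -> R -> R) (dF : nat -> R) t M :
  (forall j, is_derive (F j) t (dF j)) ->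
  is_derive (fun s => sum_f_R0 (fun j => F j s) M) t (sum_f_R0 dF M).
Proof.
  intros H. induction M as [|M IH]; simpl.
  - apply H.
  - apply (is_derive_plus (fun s => sum_f_R0 (fun j => F j s) M) (F (S M))); auto.
Qed.

Lemma sum_id1 (C D dC : nat -> R) (g e : R) M :
  D 0%nat = 0 -> dC 0%nat + 10 * C 0%nat = e ->
  (forall j, (1 <= j)%nat -> dC j + (8 * INR j + 10) * C j = 8 * (INR j - 1) * C (j-1)%nat + 10 * D (j-1)%nat) ->
  sum_f_R0 (fun j => dC j / (1 + g^2)^j) M
  - 4 * g * sum_f_R0 (fun j => C j * (- INR j * (2 * g)) / (1 + g^2)^(S j)) M
  + 10 * sum_f_R0 (fun j => C j / (1 + g^2)^j) M
  - 10 / (1 + g^2) * sum_f_R0 (fun j => D j / (1 + g^2)^j) M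
  = e - (8 * INR M * C M + 10 * D M) / (1 + g^2)^(S M).
Proof.
  intros D0 E0 ES. assert (P : 0 < 1 + g^2) by nra.
  induction M as [|M IH].
  - simpl. rewrite D0. rewrite <- E0. field. lra.
  - rewrite !tech5.
    set (S1 := sum_f_R0 (fun j => dC j / (1 + g^2)^j) M) in *.
    set (S2 := sum_f_R0 (fun j => C j * (- INR j * (2 * g)) / (1 + g^2)^(S j)) M) in *.
    set (S3 := sum_f_R0 (fun j => C j / (1 + g^2)^j) M) in *.
    set (S4 := sum_f_R0 (fun j => D j / (1 + g^2)^j) M) in *.
    specialize (ES (S M) ltac:(lia)). replace (S M - 1)%nat with M in ES by lia.
    rewrite S_INR in *.
    replace (dC (S M)) with (8 * (INR M + 1 - 1) * C M + 10 * D M - (8 * (INR M + 1) + 10) * C (S M)) by lra.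
    change ((1 + g^2)^(S (S M))) with ((1+g^2) * ((1+g^2) * (1+g^2)^M)).
    change ((1 + g^2)^(S M)) with ((1+g^2) * (1+g^2)^M).
    assert (HX : (1 + g^2) ^ M <> 0) by (apply pow_nonzero; lra).
    set (X := (1 + g^2) ^ M) in *.
    assert (IH' : S1 - 4 * g * S2 + 10 * S3 - 10 / (1 + g ^ 2) * S4 = e - (8 * INR M * C M + 10 * D M) / ((1 + g ^ 2) * X)).
    { rewrite IH. reflexivity. }
    clear IH.
    apply (Rplus_eq_reg_r (- (S1 - 4 * g * S2 + 10 * S3 - 10 / (1 + g ^ 2) * S4))).
    rewrite IH' at 2. field. split; lra.
Qed.

Lemma sum_id2 (C D dD : nat -> R) (g e : R) M :
  dD 0%nat + 13 * D 0%nat - 13 * C 0%nat = e ->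
  (forall j, (1 <= j)%nat -> dD j + (8 * INR j + 13) * D j = 13 * C j + 8 * (INR j - 1) * D (j-1)%nat) ->
  sum_f_R0 (fun j => dD j / (1 + g^2)^j) M
  - 4 * g * sum_f_R0 (fun j => D j * (- INR j * (2 * g)) / (1 + g^2)^(S j)) M
  + 13 * sum_f_R0 (fun j => D j / (1 + g^2)^j) M
  - 13 * sum_f_R0 (fun j => C j / (1 + g^2)^j) M
  = e - (8 * INR M * D M) / (1 + g^2)^(S M).
Proof.
  intros E0 ES. assert (P : 0 < 1 + g^2) by nra.
  induction M as [|M IH].
  - simpl. rewrite <- E0. field. lra.
  - rewrite !tech5.
    set (S1 := sum_f_R0 (fun j => dD j / (1 + g^2)^j) M) in *.
    set (S2 := sum_f_R0 (fun j => D j * (- INR j * (2 * g)) / (1 + g^2)^(S j)) M) in *.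
    set (S3 := sum_f_R0 (fun j => D j / (1 + g^2)^j) M) in *.
    set (S4 := sum_f_R0 (fun j => C j / (1 + g^2)^j) M) in *.
    specialize (ES (S M) ltac:(lia)). replace (S M - 1)%nat with M in ES by lia.
    rewrite S_INR in *.
    replace (dD (S M)) with (13 * C (S M) + 8 * (INR M + 1 - 1) * D M - (8 * (INR M + 1) + 13) * D (S M)) by lra.
    change ((1 + g^2)^(S (S M))) with ((1+g^2) * ((1+g^2) * (1+g^2)^M)).
    change ((1 + g^2)^(S M)) with ((1+g^2) * (1+g^2)^M).
    assert (HX : (1 + g^2) ^ M <> 0) by (apply pow_nonzero; lra).
    set (X := (1 + g^2) ^ M) in *.
    assert (IH' : S1 - 4 * g * S2 + 13 * S3 - 13 * S4 = e - (8 * INR M * D M) / ((1 + g ^ 2) * X)).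
    { rewrite IH. reflexivity. }
    clear IH.
    apply (Rplus_eq_reg_r (- (S1 - 4 * g * S2 + 13 * S3 - 13 * S4))).
    rewrite IH' at 2. field. split; lra.
Qed.

Lemma inv_unique f F l : IsInvLaplace f F -> exps (fun x => 1 < x) l ->
  (forall xi, 0 < xi -> F xi = lap l xi) -> forall t, 0 < t -> f t = eval l t.
Proof.
  intros [Hc [s Hs]] Hl HF t Ht.
  assert (K : forall t, 0 < t -> f t - eval l t = 0).
  { apply (lerch _ (Rmax s 0)).
    - intros; apply cont_min; auto. apply continuous_eval.
    - intros xi Hxi. pose proof (Rmax_l s 0). pose proof (Rmax_r s 0).
      replace 0 with (F xi - lap l xi) by (rewrite HF; [ring|lra]).
      apply laplace_minus. apply Hs; lra. apply laplace_eval.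
      apply (exps_weak (fun x => 1 < x) (fun x => 0 < xi + x)); [intros x Hx; lra | exact Hl]. }
  specialize (K t Ht). lra.
Qed.

Lemma dterm l K t : is_derive (fun s => eval l s / K) t (deval l t / K).
Proof.
  apply (is_derive_ext (fun s => / K * eval l s)). intros; req; unfold Rdiv; ring.
  replace (deval l t / K) with (/ K * deval l t) by (unfold Rdiv; ring).
  apply is_derive_scal. apply is_derive_eval.
Qed.
Theorem lemma2p2
  (cr dr : nat -> R -> R) (w1 w2 : R -> R -> R) :
  (* \mathring c_0 = F^{-1}(c_0/d_0 - 1), \mathring d_0 = 0 *)
  IsInvLaplace (cr 0%nat) (fun xi => c 0 xi / d 0 xi - 1) ->
  (forall t, dr 0%nat t = 0) ->
  (* (\mathring c_j, \mathring d_j) = F^{-1}((c_j, d_j)/d_0), j >= 1 *)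
  (forall j, (1 <= j)%nat ->
     IsInvLaplace (cr j) (fun xi => c j xi / d 0 xi) /\
     IsInvLaplace (dr j) (fun xi => d j xi / d 0 xi)) ->
  (* \mathring w_1, \mathring w_2 solve the system *)
  (forall t g, 0 < t -> 0 < g ->
     ex_derive (fun s => w1 s g) t /\ ex_derive (fun y => w1 t y) g /\
     ex_derive (fun s => w2 s g) t /\ ex_derive (fun y => w2 t y) g /\
     Derive (fun s => w1 s g) t - 4 * g * Derive (fun y => w1 t y) g
       + 10 * w1 t g - 10 / (1 + g ^ 2) * w2 t g = 130 * exp (-23 * t) /\
     Derive (fun s => w2 s g) t - 4 * g * Derive (fun y => w2 t y) g
       + 13 * w2 t g - 13 * w1 t g = 130 * exp (-23 * t)) ->
  (forall g, 0 <= g -> w1 0 g = -10 * (g ^ 2 / (1 + g ^ 2))) ->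
  (forall g, 0 <= g -> w2 0 g = 0) ->
  (forall k, decays_faster_than_exp (cr k) /\ decays_faster_than_exp (dr k)) /\
  (forall M : nat, (2 <= M)%nat ->
     let alpha := fun t g =>
       w1 t g - sum_f_R0 (fun j => cr j t / (1 + g ^ 2) ^ j) M in
     let beta := fun t g =>
       w2 t g - sum_f_R0 (fun j => dr j t / (1 + g ^ 2) ^ j) M in
     forall t g, 0 < t -> 0 < g ->
       ex_derive (fun s => alpha s g) t /\ ex_derive (fun y => alpha t y) g /\
       ex_derive (fun s => beta s g) t /\ ex_derive (fun y => beta t y) g /\
       Derive (fun s => alpha s g) t - 4 * g * Derive (fun y => alpha t y) g
         + 10 * alpha t g - 10 / (1 + g ^ 2) * beta t g
         = (8 * INR M * cr M t + 10 * dr M t) / (1 + g ^ 2) ^ (M + 1) /\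
       Derive (fun s => beta s g) t - 4 * g * Derive (fun y => beta t y) g
         + 13 * beta t g - 13 * alpha t g
         = (8 * INR M * dr M t) / (1 + g ^ 2) ^ (M + 1)).
Proof.
  intros H0 Hd0 HJ Hw Hw10 Hw20.
  assert (crE : forall j t, 0 < t -> cr j t = eval (Lc j) t).
  { intros j t Ht. destruct j as [|j].
    - apply (inv_unique (cr 0%nat) (fun xi => c 0 xi / d 0 xi - 1) (Lc 0)); auto.
      apply exps_gt1. intros xi Hxi. rewrite Lc_0. apply c0_lap; auto.
    - destruct (HJ (S j) ltac:(lia)) as [H1 _]. apply (inv_unique _ _ _ H1); auto.
      apply exps_gt1. intros xi Hxi. symmetry. apply lap_rel; auto. lia. }
  assert (drE : forall j t, 0 < t -> dr j t = eval (Ld j) t).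
  { intros j t Ht. destruct j as [|j].
    - rewrite Hd0, Ld_0. reflexivity.
    - destruct (HJ (S j) ltac:(lia)) as [_ H1]. apply (inv_unique _ _ _ H1); auto.
      apply exps_gt1. intros xi Hxi. symmetry. apply lap_rel; auto. lia. }
  split.
  - intros k. split.
    + unfold decays_faster_than_exp.
      apply (is_lim_ext_loc (fun t => exp t * eval (Lc k) t)).
      exists 0. intros t Ht. rewrite crE; auto.
      apply eval_decay. apply exps_gt1.
    + unfold decays_faster_than_exp.
      apply (is_lim_ext_loc (fun t => exp t * eval (Ld k) t)).
      exists 0. intros t Ht. rewrite drE; auto.
      apply eval_decay. apply exps_gt1.
  - intros M HM alpha beta t g Ht Hg.
    destruct (Hw t g Ht Hg) as [e1 [e2 [e3 [e4 [E1 E2]]]]].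
    set (C := fun j => eval (Lc j) t).
    set (Dd := fun j => eval (Ld j) t).
    set (dC := fun j => deval (Lc j) t).
    set (dD := fun j => deval (Ld j) t).
    assert (SC : forall y, sum_f_R0 (fun j => cr j t / (1 + y ^ 2) ^ j) M = sum_f_R0 (fun j => C j / (1 + y ^ 2) ^ j) M).
    { intros y. apply sum_eq. intros j _. unfold C. rewrite crE; auto. }
    assert (SD : forall y, sum_f_R0 (fun j => dr j t / (1 + y ^ 2) ^ j) M = sum_f_R0 (fun j => Dd j / (1 + y ^ 2) ^ j) M).
    { intros y. apply sum_eq. intros j _. unfold Dd. rewrite drE; auto. }
    assert (Dsa : is_derive (fun s => alpha s g) t
       (Derive (fun s => w1 s g) t - sum_f_R0 (fun j => dC j / (1 + g ^ 2) ^ j) M)).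
    { unfold alpha. apply (dmin (fun s => w1 s g) (fun s => sum_f_R0 (fun j => cr j s / (1 + g ^ 2) ^ j) M)).
      apply Derive_correct; exact e1.
      apply (is_derive_ext_loc (fun s => sum_f_R0 (fun j => eval (Lc j) s / (1 + g ^ 2) ^ j) M)).
      eapply filter_imp; [|apply (loc_pos t Ht)]. intros z Hz. apply sum_eq. intros j _. rewrite crE; auto.
      apply (dsum (fun j s => eval (Lc j) s / (1 + g ^ 2) ^ j)). intros j. apply dterm. }
    assert (Dsb : is_derive (fun s => beta s g) t
       (Derive (fun s => w2 s g) t - sum_f_R0 (fun j => dD j / (1 + g ^ 2) ^ j) M)).
    { unfold beta. apply (dmin (fun s => w2 s g) (fun s => sum_f_R0 (fun j => dr j s / (1 + g ^ 2) ^ j) M)).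
      apply Derive_correct; exact e3.
      apply (is_derive_ext_loc (fun s => sum_f_R0 (fun j => eval (Ld j) s / (1 + g ^ 2) ^ j) M)).
      eapply filter_imp; [|apply (loc_pos t Ht)]. intros z Hz. apply sum_eq. intros j _. rewrite drE; auto.
      apply (dsum (fun j s => eval (Ld j) s / (1 + g ^ 2) ^ j)). intros j. apply dterm. }
    assert (Dga : is_derive (fun y => alpha t y) g
       (Derive (fun y => w1 t y) g - sum_f_R0 (fun j => C j * (- INR j * (2 * g)) / (1 + g ^ 2) ^ (S j)) M)).
    { unfold alpha. apply (dmin (fun y => w1 t y) (fun y => sum_f_R0 (fun j => cr j t / (1 + y ^ 2) ^ j) M)).
      apply Derive_correct; exact e2.
      apply (is_derive_ext (fun y => sum_f_R0 (fun j => C j / (1 + y ^ 2) ^ j) M)).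
      intros y. symmetry. apply SC.
      apply (dsum (fun j y => C j / (1 + y ^ 2) ^ j)). intros j. apply dg_term. }
    assert (Dgb : is_derive (fun y => beta t y) g
       (Derive (fun y => w2 t y) g - sum_f_R0 (fun j => Dd j * (- INR j * (2 * g)) / (1 + g ^ 2) ^ (S j)) M)).
    { unfold beta. apply (dmin (fun y => w2 t y) (fun y => sum_f_R0 (fun j => dr j t / (1 + y ^ 2) ^ j) M)).
      apply Derive_correct; exact e4.
      apply (is_derive_ext (fun y => sum_f_R0 (fun j => Dd j / (1 + y ^ 2) ^ j) M)).
      intros y. symmetry. apply SD.
      apply (dsum (fun j y => Dd j / (1 + y ^ 2) ^ j)). intros j. apply dg_term. }
    assert (Dd0 : Dd 0%nat = 0) by (unfold Dd; rewrite Ld_0; reflexivity).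
    assert (E0c : dC 0%nat + 10 * C 0%nat = 130 * exp (-23 * t)).
    { unfold dC, C. rewrite Lc_0. unfold deval, eval; simpl.
      replace (- (23) * t) with (-23 * t) by ring. ring. }
    assert (E0d : dD 0%nat + 13 * Dd 0%nat - 13 * C 0%nat = 130 * exp (-23 * t)).
    { unfold dD, Dd, C. rewrite Ld_0, Lc_0. unfold deval, eval; simpl.
      replace (- (23) * t) with (-23 * t) by ring. ring. }
    assert (SI1 := sum_id1 C Dd dC g (130 * exp (-23 * t)) M Dd0 E0c
                     (fun j Hj => proj1 (ode_rel j t Hj))).
    assert (SI2 := sum_id2 C Dd dD g (130 * exp (-23 * t)) M E0d
                     (fun j Hj => proj2 (ode_rel j t Hj))).
    rewrite Nat.add_1_r.
    rewrite (crE M t Ht), (drE M t Ht). fold (C M) (Dd M).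
    repeat split.
    + eexists; exact Dsa.
    + eexists; exact Dga.
    + eexists; exact Dsb.
    + eexists; exact Dgb.
    + replace (Derive (fun s => alpha s g) t) with (Derive (fun s => w1 s g) t - sum_f_R0 (fun j => dC j / (1 + g ^ 2) ^ j) M) by (symmetry; apply is_derive_unique; exact Dsa).
      replace (Derive (fun y => alpha t y) g) with (Derive (fun y => w1 t y) g - sum_f_R0 (fun j => C j * (- INR j * (2 * g)) / (1 + g ^ 2) ^ (S j)) M) by (symmetry; apply is_derive_unique; exact Dga).
      unfold alpha, beta. rewrite SC, SD. lra.
    + replace (Derive (fun s => beta s g) t) with (Derive (fun s => w2 s g) t - sum_f_R0 (fun j => dD j / (1 + g ^ 2) ^ j) M) by (symmetry; apply is_derive_unique; exact Dsb).
      replace (Derive (fun y => beta t y) g) with (Derive (fun y => w2 t y) g - sum_f_R0 (fun j => Dd j * (- INR j * (2 * g)) / (1 + g ^ 2) ^ (S j)) M) by (symmetry; apply is_derive_unique; exact Dgb).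
      unfold alpha, beta. rewrite SC, SD. lra.
Qed.
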